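(* Let $\mathbf{C}$ be the Cantor set with a fixed compatible metric $\mathrm{dist}$, let $X \subset \mathbf{C}$, and let $f : X \to Y$ be a clopen-LC function from $X$ onto a separable metrizable space $Y$. Assume $f^{-1}(y)$ is compact for every $y \in Y$. For $n = 1,2,\dots$, let $X_n$ be the union of all fibers $f^{-1}(y)$, $y \in Y$, with the following property: there exist a sequence $y_k \to y$ in $Y$ with $y_k \neq y$ for all $k$ and $y_k \neq y_j$ for $k \neq j$, points $x_k \in f^{-1}(y_k)$, and a point $\tilde{x}_y \in \mathbf{C}$ such that $x_k \to \tilde{x}_y$ and $\mathrm{dist}(\tilde{x}_y, f^{-1}(y)) > 1/n$. Let $Y_n = f(X_n)$. Then the restriction $f|_{X_n} : X_n \to Y_n$ is an open function.
   Context: All spaces are separable metrizable. A subset of a topological space is an LC-set if it is the intersection of an open set and a closed set. A function is open if it maps open sets to open sets of its image space. A function $f : X \to Y$ is clopen-LC if for every subset $U \subset X$ that is clopen in $X$, the image $f(U)$ is an LC-set in $Y$. Note that $X_n = f^{-1}(Y_n)$ since $X_n$ is a union of fibers. *)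

(* Defs.v *)
From Stdlib Require Import Reals List.
Open Scope R_scope.

(* The Cantor set, modelled as the Cantor space 2^N. *)
Definition Cantor := nat -> bool.

Definition agree_upto (n : nat) (a b : Cantor) : Prop :=
  forall i, (i < n)%nat -> a i = b i.

Record is_metric {T : Type} (d : T -> T -> R) : Prop := {
  metric_nonneg : forall x y, 0 <= d x y;
  metric_eq0 : forall x y, d x y = 0 <-> x = y;
  metric_sym : forall x y, d x y = d y x;
  metric_tri : forall x y z, d x z <= d x y + d y z }.

Definition compatible_Cantor_metric (d : Cantor -> Cantor -> R) : Prop :=
  is_metric d /\
  (forall x eps, 0 < eps -> exists n, forall y, agree_upto n x y -> d x y < eps) /\
  (forall x n, exists eps, 0 < eps /\ forall y, d x y < eps -> agree_upto n x y).

Definition open_in {T : Type} (d : T -> T -> R) (S U : T -> Prop) : Prop :=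
  (forall x, U x -> S x) /\
  (forall x, U x -> exists eps, 0 < eps /\
     forall y, S y -> d x y < eps -> U y).

Definition open_set {T : Type} (d : T -> T -> R) (U : T -> Prop) : Prop :=
  open_in d (fun _ => True) U.

Definition closed_set {T : Type} (d : T -> T -> R) (F : T -> Prop) : Prop :=
  open_set d (fun x => ~ F x).

Definition clopen_in {T : Type} (d : T -> T -> R) (S U : T -> Prop) : Prop :=
  open_in d S U /\ open_in d S (fun x => S x /\ ~ U x).

Definition LC_set {T : Type} (d : T -> T -> R) (V : T -> Prop) : Prop :=
  exists O F, open_set d O /\ closed_set d F /\ forall y, V y <-> (O y /\ F y).

Definition image {A B : Type} (f : A -> B) (U : A -> Prop) : B -> Prop :=
  fun y => exists x, U x /\ f x = y.

(* separability: a countable dense subset (allowing the empty space). *)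
Definition separable {T : Type} (d : T -> T -> R) : Prop :=
  exists D : nat -> option T, forall y eps, 0 < eps ->
    exists k z, D k = Some z /\ d y z < eps.

Definition compact_set {T : Type} (d : T -> T -> R) (K : T -> Prop) : Prop :=
  forall (I : Type) (U : I -> T -> Prop),
    (forall i, open_set d (U i)) ->
    (forall x, K x -> exists i, U i x) ->
    exists l : list I, forall x, K x -> exists i, In i l /\ U i x.

Definition seq_cv {T : Type} (d : T -> T -> R) (u : nat -> T) (l : T) : Prop :=
  forall eps, 0 < eps -> exists N, forall k, (N <= k)%nat -> d (u k) l < eps.

(* dist(x, A) > r, where dist(x, A) = inf_{z in A} d x z (inf of the empty set = +oo):
   some lower bound of {d x z | z in A} is strictly bigger than r. *)
Definition dist_set_gt {T : Type} (d : T -> T -> R) (x : T) (A : T -> Prop) (r : R) : Prop :=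
  exists r', r < r' /\ forall z, A z -> r' <= d x z.

Definition subX (X : Cantor -> Prop) := {x : Cantor | X x}.

Definition dsub (d : Cantor -> Cantor -> R) (X : Cantor -> Prop) : subX X -> subX X -> R :=
  fun a b => d (proj1_sig a) (proj1_sig b).

Definition fiber (X : Cantor -> Prop) {Y : Type} (f : subX X -> Y) (y : Y) : Cantor -> Prop :=
  fun x => exists h : X x, f (exist _ x h) = y.

Definition clopen_LC (d : Cantor -> Cantor -> R) (X : Cantor -> Prop) {Y : Type}
  (dY : Y -> Y -> R) (f : subX X -> Y) : Prop :=
  forall U : subX X -> Prop, clopen_in (dsub d X) (fun _ => True) U ->
    LC_set dY (image f U).

Definition Pn (d : Cantor -> Cantor -> R) (X : Cantor -> Prop) {Y : Type}
  (dY : Y -> Y -> R) (f : subX X -> Y) (n : nat) (y : Y) : Prop :=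
  exists (yk : nat -> Y) (xk : nat -> Cantor) (xt : Cantor),
    seq_cv dY yk y /\
    (forall k, yk k <> y) /\
    (forall k j, k <> j -> yk k <> yk j) /\
    (forall k, fiber X f (yk k) (xk k)) /\
    seq_cv d xk xt /\
    dist_set_gt d xt (fiber X f y) (1 / INR n).

Definition Xn (d : Cantor -> Cantor -> R) (X : Cantor -> Prop) {Y : Type}
  (dY : Y -> Y -> R) (f : subX X -> Y) (n : nat) : subX X -> Prop :=
  fun x => Pn d X dY f n (f x).

Definition Yn (d : Cantor -> Cantor -> R) (X : Cantor -> Prop) {Y : Type}
  (dY : Y -> Y -> R) (f : subX X -> Y) (n : nat) : Y -> Prop :=
  image f (Xn d X dY f n).

Definition open_restriction {A B : Type} (dA : A -> A -> R) (dB : B -> B -> R)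
  (f : A -> B) (S : A -> Prop) : Prop :=
  forall U, open_in dA S U -> open_in dB (image f S) (image f U).

(* Main.v *)
Require Import Defs.
From Stdlib Require Import Reals List Lra Lia Classical ClassicalEpsilon.
Open Scope R_scope.

Definition inf_agree (a : nat -> Cantor) (p : Cantor) (m : nat) : Prop :=
  forall N, exists k, (N <= k)%nat /\ agree_upto m p (a k).

Fixpoint Pseq (a : nat -> Cantor) (m : nat) : Cantor :=
  match m with
  | O => fun _ => false
  | S m' =>
    let q := fun (b : bool) (i : nat) => if Nat.eqb i m' then b else Pseq a m' i in
    if excluded_middle_informative (inf_agree a (q true) (S m')) then q true else q false
  end.

Lemma Pseq_inf a m : inf_agree a (Pseq a m) m.
Proof.
  induction m as [|m IH].
  - intros N. exists N. split; [lia|]. intros i Hi. lia.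
  - simpl. destruct (excluded_middle_informative _) as [Ht|Ht]; [exact Ht|].
    assert (HN1 : exists N1, forall k, (N1 <= k)%nat ->
      ~ agree_upto (S m) (fun i => if Nat.eqb i m then true else Pseq a m i) (a k)).
    { apply NNPP; intro Hc. apply Ht. intro N. apply NNPP; intro Hc2.
      apply Hc. exists N. intros k Hk Hag. apply Hc2. exists k. auto. }
    destruct HN1 as [N1 HN1]. intro N.
    destruct (IH (Nat.max N N1)) as [k [Hk Hag]]. exists k. split; [lia|].
    assert (Hb : a k m = false).
    { destruct (a k m) eqn:E; auto. exfalso. apply (HN1 k); [lia|].
      intros i Hi. destruct (Nat.eqb i m) eqn:Ei.
      - apply Nat.eqb_eq in Ei. subst. auto.
      - apply Nat.eqb_neq in Ei. apply Hag. lia. }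
    intros i Hi. destruct (Nat.eqb i m) eqn:Ei.
    + apply Nat.eqb_eq in Ei. subst. auto.
    + apply Nat.eqb_neq in Ei. apply Hag. lia.
Qed.

Lemma Pseq_stable a i m : (i < m)%nat -> Pseq a m i = Pseq a (S i) i.
Proof.
  induction m as [|m IH]; intros H; [lia|].
  destruct (Nat.eq_dec i m) as [->|Hne]; [reflexivity|].
  rewrite <- IH by lia. simpl.
  destruct (excluded_middle_informative _);
  destruct (Nat.eqb i m) eqn:E; auto; apply Nat.eqb_eq in E; lia.
Qed.

Lemma cluster (a : nat -> Cantor) :
  exists x, forall m N, exists k, (N <= k)%nat /\ agree_upto m x (a k).
Proof.
  exists (fun i => Pseq a (S i) i). intros m N.
  destruct (Pseq_inf a m N) as [k [Hk Hag]]. exists k. split; auto.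
  intros i Hi. rewrite <- (Pseq_stable a i m Hi). apply Hag; auto.
Qed.

Lemma cyl_open d (hd : compatible_Cantor_metric d) m w z :
  agree_upto m w z -> exists eps, 0 < eps /\ forall y, d z y < eps -> agree_upto m w y.
Proof.
  intros Hz. destruct hd as [_ [_ H3]]. destruct (H3 z m) as [eps [He Hy]].
  exists eps. split; auto. intros y Hd i Hi. rewrite (Hz i Hi). apply (Hy y Hd i Hi).
Qed.

Lemma cyl_closed d (hd : compatible_Cantor_metric d) m w z :
  ~ agree_upto m w z -> exists eps, 0 < eps /\ forall y, d z y < eps -> ~ agree_upto m w y.
Proof.
  intros Hz. destruct hd as [_ [_ H3]]. destruct (H3 z m) as [eps [He Hy]].
  exists eps. split; auto. intros y Hd Hw. apply Hz. intros i Hi.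
  rewrite (Hw i Hi). symmetry. apply (Hy y Hd i Hi).
Qed.

Theorem lemma1 (d : Cantor -> Cantor -> R) (hd : compatible_Cantor_metric d)
  (X : Cantor -> Prop) (Y : Type) (dY : Y -> Y -> R)
  (hdY : is_metric dY) (hsep : separable dY)
  (f : subX X -> Y) (hf : clopen_LC d X dY f)
  (honto : forall y : Y, exists x : subX X, f x = y)
  (hcpt : forall y : Y, compact_set d (fiber X f y))
  (n : nat) (hn : (1 <= n)%nat) :
  open_restriction (dsub d X) dY f (Xn d X dY f n).
Proof.
  intros U [HUsub HUopen]. split.
  { intros y [x [Ux fx]]. exists x. split; auto. }
  intros y [x0 [Ux0 <-]]. destruct (HUopen x0 Ux0) as [eps [Heps HU]].
  apply NNPP; intro Hno.
  assert (H : forall k : nat, exists p : Y * Cantor,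
    image f (Xn d X dY f n) (fst p) /\ dY (f x0) (fst p) < / (INR k + 1) /\
    ~ image f U (fst p) /\
    (exists (zk : nat -> Y) (pk : nat -> Cantor), seq_cv dY zk (fst p) /\
        (forall j, fiber X f (zk j) (pk j)) /\ seq_cv d pk (snd p)) /\
    dist_set_gt d (snd p) (fiber X f (fst p)) (1 / INR n)).
  { intro k. apply NNPP; intro Hk. apply Hno. exists (/ (INR k + 1)). split.
    { apply Rinv_0_lt_compat. pose proof (pos_INR k). lra. }
    intros y [x [HXn <-]] Hd. apply NNPP; intro HnU. apply Hk.
    pose proof HXn as HP.
    destruct HP as [yk [xk [xt [Hcv [_ [_ [Hfib [Hcv2 Hdist]]]]]]]].
    exists (f x, xt). simpl. split; [exists x; auto|].
    split; [auto|]. split; [auto|]. split; [|auto].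
    exists yk, xk. auto. }
  set (g := fun k => proj1_sig (constructive_indefinite_description _ (H k))).
  assert (Hg : forall k, image f (Xn d X dY f n) (fst (g k)) /\ dY (f x0) (fst (g k)) < / (INR k + 1) /\
    ~ image f U (fst (g k)) /\
    (exists (zk : nat -> Y) (pk : nat -> Cantor), seq_cv dY zk (fst (g k)) /\
        (forall j, fiber X f (zk j) (pk j)) /\ seq_cv d pk (snd (g k))) /\
    dist_set_gt d (snd (g k)) (fiber X f (fst (g k))) (1 / INR n)).
  { intro k. unfold g. exact (proj2_sig (constructive_indefinite_description _ (H k))). }
  clearbody g. clear H.
  destruct (cluster (fun k => snd (g k))) as [xt Hxt].
  set (r := 1 / INR n).
  assert (Hr : 0 < r).
  { unfold r. apply Rdiv_lt_0_compat; [lra|]. apply lt_0_INR. lia. }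
  pose proof hd as [hm [H2 H3]].
  destruct (H2 xt (r/2)) as [m' Hm']; [lra|].
  destruct (H2 (proj1_sig x0) eps Heps) as [m Hm].
  set (S := fun s : subX X => agree_upto m (proj1_sig x0) (proj1_sig s) \/
                              agree_upto m' xt (proj1_sig s)).
  assert (HS : clopen_in (dsub d X) (fun _ => True) S).
  { split; split; auto.
    - intros s [Hs|Hs].
      + destruct (cyl_open d hd _ _ _ Hs) as [e [He Hy]]. exists e. split; auto.
        intros t _ Ht. left. apply Hy. exact Ht.
      + destruct (cyl_open d hd _ _ _ Hs) as [e [He Hy]]. exists e. split; auto.
        intros t _ Ht. right. apply Hy. exact Ht.
    - intros s [_ Hs]. unfold S in Hs.
      assert (Ha : ~ agree_upto m (proj1_sig x0) (proj1_sig s)) by tauto.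
      assert (Hb : ~ agree_upto m' xt (proj1_sig s)) by tauto.
      destruct (cyl_closed d hd _ _ _ Ha) as [e1 [He1 Hy1]].
      destruct (cyl_closed d hd _ _ _ Hb) as [e2 [He2 Hy2]].
      exists (Rmin e1 e2). split; [apply Rmin_pos; auto|].
      intros t _ Ht. split; auto. unfold S. unfold dsub in Ht.
      pose proof (Rmin_l e1 e2). pose proof (Rmin_r e1 e2).
      intros [Hc|Hc]; [apply (Hy1 (proj1_sig t)) | apply (Hy2 (proj1_sig t))]; auto; lra. }
  destruct (hf S HS) as [O [F [HO [HF HOF]]]].
  assert (HOx0 : O (f x0)).
  { apply (HOF (f x0)). exists x0. split; auto. left. intros i Hi. reflexivity. }
  destruct (proj2 HO (f x0) HOx0) as [eps0 [Heps0 HO0]].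
  destruct (archimed (/ eps0)) as [Har _].
  assert (HN : exists N : nat, / (INR N + 1) < eps0).
  { destruct (INR_unbounded (/ eps0)) as [N HNb]. exists N.
    pose proof (pos_INR N). pose proof (Rinv_0_lt_compat eps0 Heps0).
    rewrite <- (Rinv_inv eps0). apply Rinv_lt_contravar; [nra|lra]. }
  destruct HN as [N HN].
  destruct (Hxt m' N) as [k [Hk Hagk]].
  destruct (Hg k) as [HYn [Hdk [HnU [[zk [pk [Hzk [Hfib Hpk]]]] [r' [Hrr' Hdist]]]]]].
  set (yk := fst (g k)) in *. set (xk := snd (g k)) in *.
  assert (HOyk : O yk).
  { apply HO0; auto.
    assert (/ (INR k + 1) <= / (INR N + 1)).
    { apply Rinv_le_contravar. pose proof (pos_INR N); lra.
      apply Rplus_le_compat_r. apply le_INR. exact Hk. }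
    lra. }
  assert (HFyk : F yk).
  { apply NNPP; intro nF.
    destruct (proj2 HF yk nF) as [e1 [He1 Hy1]].
    destruct (cyl_open d hd _ _ _ Hagk) as [eB [HeB HyB]].
    destruct (Hzk e1 He1) as [j1 Hj1].
    destruct (Hpk eB HeB) as [j2 Hj2].
    set (j := Nat.max j1 j2).
    destruct (Hfib j) as [h Hh].
    apply (Hy1 (zk j) I).
    { rewrite (metric_sym _ hdY). apply Hj1. unfold j; lia. }
    apply (HOF (zk j)). exists (exist _ (pk j) h). split; auto.
    right. simpl. apply HyB. rewrite (metric_sym _ (proj1 hd)). apply Hj2. unfold j; lia. }
  destruct (proj2 (HOF yk) (conj HOyk HFyk)) as [s [[Hs|Hs] Hfs]].
  - apply HnU. exists s. split; auto. apply HU.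
    + destruct HYn as [x [HXn Hfx]]. unfold Xn. rewrite Hfs. unfold Xn in HXn.
      rewrite Hfx in HXn. exact HXn.
    + unfold dsub. apply Hm. exact Hs.
  - destruct s as [z hz]. simpl in Hs.
    assert (Hfz : fiber X f yk z) by (exists hz; exact Hfs).
    pose proof (Hdist z Hfz).
    pose proof (Hm' z Hs). pose proof (Hm' xk Hagk).
    pose proof (metric_tri _ hm xk xt z). rewrite (metric_sym _ hm xk xt) in H4.
    fold r in Hrr'. lra.
Qed.
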